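(* For every mad family $\mathcal A$ on $\omega$, $\omega^{\mathfrak t}$ is relatively countably compact in $\Psi(\mathcal A)^{\mathfrak t}$; consequently $\Psi(\mathcal A)$ is $(\mathfrak t,\omega^* )$-pseudocompact.
   Context: An almost disjoint family is an infinite family $\mathcal A$ of infinite subsets of $\omega$ with pairwise finite intersections; a mad family is a maximal one under inclusion. $\Psi(\mathcal A)=\mathcal A\cup\omega$, where points of $\omega$ are isolated and each $A\in\mathcal A$ has local base $\{\{A\}\cup(A\setminus n):n\in\omega\}$. $\mathfrak t$ is the tower number: the least $\kappa$ such that there is a $\subseteq^*$-decreasing family $\{A_\alpha:\alpha<\kappa\}$ of infinite subsets of $\omega$ with no infinite pseudo-intersection. A subset $Y$ of a space $Z$ is relatively countably compact in $Z$ if every countably infinite subset of $Y$ has an accumulation point in $Z$. $\omega^*$ is the set of free ultrafilters on $\omega$. For $p\in\omega^*$ and a sequence $(B_n)$ of subsets of $X$, $x$ is a $p$-limit of $(B_n)$ if $\{n:V\cap B_n\ne\emptyset\}\in p$ for every neighborhood $V$ of $x$. $X$ is $(\kappa,\omega^* )$-pseudocompact if for every family $\{(V^\alpha_n:n\in\omega):\alpha<\kappa\}$ of sequences of nonempty open subsets of $X$ there is $p\in\omega^*$ such that each $(V^\alpha_n:n\in\omega)$ has a $p$-limit point in $X$. *)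

(* Defs.v *)
From mathcomp Require Import all_boot.
From mathcomp Require Import boolp classical_sets cardinality.

Set Implicit Arguments.
Unset Strict Implicit.
Unset Printing Implicit Defensive.

Local Open Scope classical_set_scope.

Definition almost_disjoint_family (AA : set (set nat)) : Prop :=
  infinite_set AA /\
  (forall A, AA A -> infinite_set A) /\
  (forall A B, AA A -> AA B -> A <> B -> finite_set (A `&` B)).

Definition mad_family (AA : set (set nat)) : Prop :=
  almost_disjoint_family AA /\
  (forall BB, almost_disjoint_family BB -> AA `<=` BB -> BB = AA).

Inductive psi_pt (AA : set (set nat)) : Type :=
  | PN : nat -> psi_pt AA
  | PA : forall A : set nat, AA A -> psi_pt AA.

(* points of omega are isolated; A has local base {A} u (A \ n) *)
Definition psi_open (AA : set (set nat)) (U : set (psi_pt AA)) : Prop :=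
  forall (A : set nat) (hA : AA A), U (PA hA) ->
    exists n : nat, forall k : nat, A k -> (n <= k)%N -> U (PN AA k).

Definition product_open (X : Type) (openX : set X -> Prop) (I : Type)
    (U : set (I -> X)) : Prop :=
  forall f, U f ->
    exists (F : set I) (V : I -> set X),
      finite_set F /\
      (forall i, F i -> openX (V i) /\ V i (f i)) /\
      (forall g, (forall i, F i -> V i (g i)) -> U g).

Arguments product_open {X} openX I U.

Definition acc_point (T : Type) (openT : set T -> Prop) (S : set T) (x : T) :=
  forall U, openT U -> U x -> exists y, S y /\ y <> x /\ U y.

Definition rel_countably_compact (T : Type) (openT : set T -> Prop)
    (Y : set T) : Prop :=
  forall S : set T, S `<=` Y -> countable S -> infinite_set S ->
    exists x : T, acc_point openT S x.

Definition omega_pow (AA : set (set nat)) (I : Type) : set (I -> psi_pt AA) :=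
  [set f | forall i, exists n : nat, f i = PN AA n].

Definition ultrafilter_on_nat (p : set (set nat)) : Prop :=
  p setT /\ ~ p set0 /\
  (forall B C, p B -> B `<=` C -> p C) /\
  (forall B C, p B -> p C -> p (B `&` C)) /\
  (forall B, p B \/ p (~` B)).

Definition free_ultrafilter (p : set (set nat)) : Prop :=
  ultrafilter_on_nat p /\ (forall B, finite_set B -> ~ p B).

Definition p_limit (T : Type) (openT : set T -> Prop) (p : set (set nat))
    (B : nat -> set T) (x : T) : Prop :=
  forall W, openT W -> W x -> p [set n | W `&` B n !=set0].

(* (K, omega^* )-pseudocompactness, K given as an index type of size kappa *)
Definition kappa_ostar_pseudocompact (T : Type) (openT : set T -> Prop)
    (K : Type) : Prop :=
  forall V : K -> nat -> set T,
    (forall a n, openT (V a n) /\ V a n !=set0) ->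
    exists p, free_ultrafilter p /\
      forall a, exists x, p_limit openT p (V a) x.

Definition almost_sub (A B : set nat) : Prop := finite_set (A `\` B).

Definition strict_well_order (J : Type) (lt : J -> J -> Prop) : Prop :=
  (forall j, ~ lt j j) /\
  (forall i j k, lt i j -> lt j k -> lt i k) /\
  (forall i j, lt i j \/ i = j \/ lt j i) /\
  well_founded lt.

Definition is_tower (J : Type) (lt : J -> J -> Prop) (T : J -> set nat) : Prop :=
  strict_well_order lt /\
  (forall j, infinite_set (T j)) /\
  (forall j k, lt j k -> almost_sub (T k) (T j)) /\
  ~ (exists B : set nat, infinite_set B /\ forall j, almost_sub B (T j)).

Definition has_card_t (I : Type) : Prop :=
  (exists (J : Type) (lt : J -> J -> Prop) (T : J -> set nat),
      is_tower lt T /\ exists f : I -> J, bijective f) /\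
  (forall (J : Type) (lt : J -> J -> Prop) (T : J -> set nat),
      is_tower lt T -> exists f : I -> J, injective f).

Arguments omega_pow AA I _ : clear implicits.
Arguments kappa_ostar_pseudocompact {T} openT K.

(* Main.v *)
From Stdlib Require Import Wellfounded.
Require Import Defs.
From mathcomp Require Import all_boot.
From mathcomp Require Import boolp classical_sets cardinality.
From mathcomp Require Import filter.

Local Open Scope classical_set_scope.

Lemma finU {T : Type} {A B : set T} : finite_set A -> finite_set B -> finite_set (A `|` B).
Proof. by move=> hA hB; rewrite finite_setU. Qed.

Lemma almost_sub_trans {A B C : set nat} :
  almost_sub A B -> almost_sub B C -> almost_sub A C.
Proof.
rewrite /almost_sub => h1 h2; apply: (sub_finite_set _ (finU h1 h2)).
move=> n [An nC]; case: (pselect (B n)) => Bn; [right|left]; by split.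
Qed.

Lemma sub_almost {A B C : set nat} : A `<=` B -> almost_sub B C -> almost_sub A C.
Proof.
rewrite /almost_sub => h1 h2; apply: (sub_finite_set _ h2).
by move=> n [An nC]; split => //; apply: h1.
Qed.

Lemma almost_subI {A X Y : set nat} :
  almost_sub A X -> almost_sub A Y -> almost_sub A (X `&` Y).
Proof.
rewrite /almost_sub => h1 h2; apply: (sub_finite_set _ (finU h1 h2)).
move=> n [An nXY]; case: (pselect (X n)) => Xn; [right|left]; split => //.
by move=> Yn; apply: nXY.
Qed.

Lemma bounded_finite (A : set nat) (m : nat) :
  (forall k, A k -> (k < m)%N) -> finite_set A.
Proof.
move=> h; apply: (sub_finite_set _ (finite_II m)) => k Ak; exact: h.
Qed.

Lemma infinite_large {A : set nat} (m : nat) : infinite_set A ->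
  exists k, A k /\ (m <= k)%N.
Proof.
move=> hA; apply: contrapT => hn; apply: hA; apply: (@bounded_finite _ m).
move=> k Ak; rewrite ltnNge; apply/negP => mk; apply: hn; by exists k.
Qed.

Lemma mad_meets {AA : set (set nat)} {D : set nat} :
  mad_family AA -> infinite_set D -> exists A, AA A /\ infinite_set (A `&` D).
Proof.
move=> [[AAinf [AAel AAdis]] AAmax] Dinf.
apply: contrapT => hn.
have hfin : forall A, AA A -> finite_set (A `&` D).
  move=> A AA_A; apply: contrapT => hi; apply: hn; by exists A.
have adBB : almost_disjoint_family (AA `|` [set D]).
  split; first by apply: (sub_infinite_set _ AAinf) => A hA; left.
  split; first by move=> A [hA|->]; [apply: AAel|].
  move=> A B [hA|->] [hB|->] AB.
  - exact: AAdis.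
  - exact: hfin.
  - rewrite setIC; exact: hfin.
  - by case: AB.
have := AAmax _ adBB (fun A hA => or_introl hA) => eqBB.
have AAD : AA D by rewrite -eqBB; right.
by apply: Dinf; rewrite -(setIid D); apply: hfin.
Qed.

Definition conv {AA : set (set nat)} (g : nat -> nat) (C : set nat) (x : psi_pt AA) :=
  forall W, psi_open W -> W x -> finite_set (C `&` [set n | ~ W (PN AA (g n))]).

Lemma refine_seq (AA : set (set nat)) (B : set nat) (g : nat -> nat) :
  mad_family AA -> infinite_set B ->
  exists C (x : psi_pt AA), C `<=` B /\ infinite_set C /\ conv g C x.
Proof.
move=> mad Binf.
case: (pselect (exists k, infinite_set (B `&` [set n | g n = k]))) => [[k hk]|hno].
  exists (B `&` [set n | g n = k]), (PN AA k); split; first by move=> n [].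
  split => // W _ Wx; apply: (sub_finite_set _ (finite_set0 nat)).
  by move=> n [[_ /= ->]].
have fib : forall k, finite_set (B `&` [set n | g n = k]).
  move=> k; apply: contrapT => hk; apply: hno; by exists k.
have Dinf : infinite_set (g @` B).
  move=> Dfin; apply: Binf.
  apply: (sub_finite_set _ (bigcup_finite Dfin (fun k _ => fib k))).
  move=> n Bn; exists (g n); first by exists n.
  by split.
have [A [AA_A Ainf]] := mad_meets mad Dinf.
exists (B `&` [set n | A (g n)]), (PA AA_A); split; first by move=> n [].
split.
  move=> Cfin; apply: Ainf; apply: (sub_finite_set _ (finite_image g Cfin)).
  move=> k [Ak [n Bn gn]]; exists n => //; split => //=; by rewrite gn.
move=> W /(_ A AA_A) Wo /Wo [m hm].
have := bigcup_finite (finite_II m) (fun k _ => fib k) => hf.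
apply: (sub_finite_set _ hf) => n [[Bn Agn] /= nW].
exists (g n); last by split.
rewrite /=; rewrite ltnNge; apply/negP => mk; apply: nW; exact: hm.
Qed.
Lemma build {J : Type} {lt : J -> J -> Prop} {Hg : J -> Prop} {Sref : J -> set nat -> Prop} :
  well_founded lt ->
  (forall b c, lt c b -> Hg b -> Hg c) ->
  (forall b (N : J -> set nat), Hg b ->
     (forall c, lt c b -> infinite_set (N c)) ->
     (forall c d, lt c b -> lt d c -> almost_sub (N c) (N d)) ->
     exists B, infinite_set B /\ forall c, lt c b -> almost_sub B (N c)) ->
  (forall b B, infinite_set B -> exists C, C `<=` B /\ infinite_set C /\ Sref b C) ->
  exists N : J -> set nat, forall b, Hg b ->
    infinite_set (N b) /\ (forall c, lt c b -> almost_sub (N b) (N c)) /\ Sref b (N b).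
Proof.
move=> wf Hdown Hpi Href.
pose ext (b : J) (g : forall c, lt c b -> set nat) : J -> set nat :=
  fun c => match pselect (lt c b) with left p => g c p | right _ => setT end.
pose PB b g := fun B => infinite_set B /\ forall c, lt c b -> almost_sub B (ext b g c).
pose Bof b g := match pselect (exists B, PB b g B) with
   left h => proj1_sig (cid h) | right _ => setT end.
pose step b (g : forall c, lt c b -> set nat) : set nat :=
  match pselect (exists C, C `<=` Bof b g /\ infinite_set C /\ Sref b C) with
  | left h => proj1_sig (cid h) | right _ => Bof b g end.
pose N := Fix wf (fun _ => set nat) step.
have NE : forall b, N b = step b (fun c _ => N c).
  move=> b; rewrite /N Fix_eq //.
  move=> x f g fg; have -> // : f = g.
  apply: functional_extensionality_dep => y; apply: functional_extensionality_dep => p.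
  exact: fg.
exists N => b; elim/(well_founded_ind wf): b => b IH Hb.
have extE : forall c, lt c b -> ext b (fun c _ => N c) c = N c.
  by move=> c cb; rewrite /ext; case: pselect.
have [B0 [B0inf B0pi]] : exists B0, PB b (fun c _ => N c) B0.
  have [B [Binf Bpi]] := Hpi b N Hb
    (fun c cb => (IH c cb (Hdown _ _ cb Hb)).1)
    (fun c d cb dc => ((IH c cb (Hdown _ _ cb Hb)).2.1 d dc)).
  exists B; split => // c cb; rewrite extE //; exact: Bpi.
have [B1inf B1pi] : PB b (fun c _ => N c) (Bof b (fun c _ => N c)).
  rewrite /Bof; case: pselect => [h|hn]; first exact: (proj2_sig (cid h)).
  by exfalso; apply: hn; exists B0.
have [C [CB [Cinf CS]]] := Href b _ B1inf.
rewrite NE /step; case: pselect => [h|hn]; last by exfalso; apply: hn; exists C.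
have [h1 [h2 h3]] := proj2_sig (cid h).
split => //; split => // c cb.
apply: (sub_almost h1); rewrite -(extE c cb); exact: B1pi.
Qed.

Definition Hgood (I : Type) {J : Type} (lt : J -> J -> Prop) (b : J) : Prop :=
  ~ exists h : I -> {c : J | lt c b}, injective h.

Lemma sig_eq {J : Type} {P : J -> Prop} (u v : {c : J | P c}) : sval u = sval v -> u = v.
Proof. apply: eq_sig_hprop => x p q; exact: Prop_irrelevance. Qed.

Lemma pick_good {I : Type} : has_card_t I ->
  exists J (lt : J -> J -> Prop) (T : J -> set nat) (e : I -> J),
    is_tower lt T /\ injective e /\ forall i, Hgood I lt (e i).
Proof.
move=> [[J [lt [T [tow [f fbij]]]]] _].
exists J, lt, T.
have [[irr [trans [tri wf]]] _] := tow.
case: (pselect (exists a, ~ Hgood I lt a)) => [[a na]|hn]; last first.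
  exists f; split => //; split; first exact: bij_inj.
  move=> i; apply: contrapT => hi; apply: hn; by exists (f i).
have [a0 [na0 min0]] : exists a0, ~ Hgood I lt a0 /\ forall c, lt c a0 -> Hgood I lt c.
  apply: contrapT => hm; apply: na.
  elim/(well_founded_ind wf): a => a IH.
  apply: contrapT => nga; apply: hm; exists a; split => //.
have [h hinj] : exists h : I -> {c : J | lt c a0}, injective h by apply: contrapT.
exists (fun i => sval (h i)); split => //; split.
  by move=> i j /sig_eq /hinj.
move=> i; apply: min0; exact: (svalP (h i)).
Qed.

Lemma core (AA : set (set nat)) (I : Type) (G : I -> nat -> nat) :
  mad_family AA -> has_card_t I ->
  exists p, free_ultrafilter p /\ forall i, exists x : psi_pt AA,
    forall W, psi_open W -> W x -> p [set n | W (PN AA (G i n))].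
Proof.
move=> mad hc.
have [J [lt [T [e [tow [einj egood]]]]]] := pick_good hc.
have [[irr [trans [tri wf]]] _] := tow.
have Hdown : forall b c, lt c b -> Hgood I lt b -> Hgood I lt c.
  move=> b c cb Hb [h hinj]; apply: Hb.
  exists (fun i => exist (fun d => lt d b) (sval (h i)) (trans _ _ _ (svalP (h i)) cb)).
  move=> i j /(f_equal (@sval _ _)) /= hij; apply: hinj; exact: sig_eq.
have Hpi : forall b (N : J -> set nat), Hgood I lt b ->
     (forall c, lt c b -> infinite_set (N c)) ->
     (forall c d, lt c b -> lt d c -> almost_sub (N c) (N d)) ->
     exists B, infinite_set B /\ forall c, lt c b -> almost_sub B (N c).
  move=> b N Hb Ninf Ndec; apply: contrapT => hno; apply: Hb.
  pose lt' (x y : {c : J | lt c b}) := lt (sval x) (sval y).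
  pose T' (x : {c : J | lt c b}) := N (sval x).
  have tw : is_tower lt' T'.
    split.
      split; first by move=> x; exact: irr.
      split; first by move=> x y z; exact: trans.
      split; last exact: wf_inverse_image.
      move=> x y; case: (tri (sval x) (sval y)) => [|[|]] hxy.
      + by left.
      + by right; left; apply: sig_eq.
      + by right; right.
    split; first by move=> x; exact: Ninf (svalP x).
    split; first by move=> x y xy; exact: Ndec (svalP y) xy.
    move=> [B [Binf HB]]; apply: hno; exists B; split => // c cb.
    exact: (HB (exist _ c cb)).
  have [_ hall] := hc; exact: hall _ lt' T' tw.
pose Sref b C := forall i, e i = b -> exists x : psi_pt AA, conv (G i) C x.
have Href : forall b B, infinite_set B -> exists C, C `<=` B /\ infinite_set C /\ Sref b C.
  move=> b B Binf; case: (pselect (exists i, e i = b)) => [[i ei]|hn].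
    have [C [x [CB [Cinf Cc]]]] := @refine_seq AA B (G i) mad Binf.
    exists C; split => //; split => // j ej.
    have ij : i = j by apply: einj; rewrite ei ej.
    by subst j; exists x.
  exists B; split => //; split => // i ei; exfalso; apply: hn; by exists i.
have [N HN] := build wf Hdown Hpi Href.
pose F0 := fun X : set nat => cofinite_set X \/ exists b, Hgood I lt b /\ almost_sub (N b) X.
have F0P : ProperFilter F0.
  apply: Build_ProperFilter_ex.
    move=> P [Pcof|[b [Hb Pa]]].
      apply: infinite_setN0; exact: cofinite_set_infinite infinite_nat Pcof.
    apply: contrapT => hn; apply: (HN b Hb).1; apply: (sub_finite_set _ Pa).
    move=> n Nn; split => // Pn; apply: hn; by exists n.
  constructor.
  - by left; rewrite setCT; exact: finite_set0.
  - move=> X Y [hX|[b [Hb hX]]] [hY|[c [Hc hY]]].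
    + by left; rewrite setCI; apply: finU.
    + right; exists c; split => //; apply: almost_subI => //.
      by apply: (sub_finite_set _ hX) => n [].
    + right; exists b; split => //; apply: almost_subI => //.
      by apply: (sub_finite_set _ hY) => n [].
    + case: (tri b c) => [bc|[bc|cb]].
      * right; exists c; split => //; apply: almost_subI => //.
        exact: almost_sub_trans ((HN c Hc).2.1 b bc) hX.
      * subst c; right; exists b; split => //; exact: almost_subI.
      * right; exists b; split => //; apply: almost_subI => //.
        exact: almost_sub_trans ((HN b Hb).2.1 c cb) hY.
  - move=> P Q PQ [hP|[b [Hb hP]]].
      left; apply: (sub_finite_set _ hP) => n nQ nP; apply: nQ; exact: PQ.
    right; exists b; split => //; apply: (sub_finite_set _ hP) => n [Nn nQ].
    split => // Pn; apply: nQ; exact: PQ.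
have [U [Uu sub]] := ultraFilterLemma F0P.
exists U; split.
  split.
    split; first exact: filterT.
    split; first exact: filter_not_empty.
    split; first by move=> B C UB BC; exact: filterS BC UB.
    split; first by move=> B C UB UC; exact: filterI.
    move=> B; exact: in_ultra_setVsetC.
  move=> B Bfin UB.
  have UC : U (~` B) by apply: sub; left; rewrite setCK.
  apply: (filter_not_empty U); rewrite -(setICr B); exact: filterI.
move=> i; have [Ninf [_ Sr]] := HN (e i) (egood i).
have [x cx] := Sr i erefl.
exists x => W Wo Wx; apply: sub; right; exists (e i); split; first exact: egood.
apply: (sub_finite_set _ (cx W Wo Wx)) => n [Nn nW]; by split.
Qed.

Lemma finI {I : Type} {p : set (set nat)} {F : set I} (Q : I -> set nat) :
  ultrafilter_on_nat p -> finite_set F -> (forall i, F i -> p (Q i)) ->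
  p [set n | forall i, F i -> Q i n].
Proof.
move=> [pT [_ [pmon [pI _]]]] Ffin hQ.
have [s Fs] := (@finite_seqP {classic I} F).1 Ffin.
have key : forall s' : seq {classic I}, (forall i, i \in s' -> p (Q i)) ->
    p [set n | forall i, i \in s' -> Q i n].
  elim => [|a s' IH] hs'.
    by apply: (pmon _ _ pT) => n _ i; rewrite in_nil.
  apply: (pmon _ _ (pI _ _ (hs' a (mem_head a s')) (IH (fun i hi => hs' i (@mem_behead _ (a :: s') i hi))))) => n [Qa Qs] i; rewrite in_cons => /orP [/eqP ->|hi] //; exact: Qs.
have hs : forall i, i \in s -> p (Q i).
  move=> i hi; apply: hQ; rewrite Fs; exact: hi.
apply: (pmon _ _ (key s hs)) => n hn i Fi; apply: hn; move: Fi; rewrite Fs; exact.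
Qed.

Theorem lemma3p7 (AA : set (set nat)) (I : Type) :
  mad_family AA -> has_card_t I ->
  rel_countably_compact (product_open (@psi_open AA) I) (omega_pow AA I) /\
  kappa_ostar_pseudocompact (@psi_open AA) I.
Proof.
move=> mad hc.
have AAel : forall A, AA A -> infinite_set A by have [[_ [h _]] _] := mad.
split; last first.
  move=> V hV.
  have ex : forall a n, exists k, V a n (PN AA k).
    move=> a n; have [Vo [z Vz]] := hV a n.
    case: z Vz => [k|A hA] Vz; first by exists k.
    have [m hm] := Vo A hA Vz.
    have [k [Ak mk]] := infinite_large m (AAel A hA).
    exists k; exact: hm.
  pose G a n := proj1_sig (cid (ex a n)).
  have [p [pf hp]] := @core AA I G mad hc.
  exists p; split => // a; have [x hx] := hp a; exists x => W Wo Wx.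
  have [[_ [_ [pmon _]]] _] := pf.
  apply: (pmon _ _ (hx W Wo Wx)) => n Wn; exists (PN AA (G a n)); split => //.
  exact: (proj2_sig (cid (ex a n))).
move=> S SY _ Sinf.
have exn : forall l : list (I -> psi_pt AA), exists y, S y /\ ~ List.In y l.
  move=> l; apply: contrapT => hn; apply: Sinf.
  apply: (@sub_finite_set _ _ [set y | List.In y l]).
    move=> y Sy; apply: contrapT => ny; apply: hn; by exists y.
  elim: l {hn} => [|a l IH].
    by apply: (sub_finite_set _ (finite_set0 _)) => y [].
  apply: (sub_finite_set _ (finU (finite_set1 a) IH)) => y [<-|h]; [by left|by right].
pose nxt (l : list (I -> psi_pt AA)) := proj1_sig (cid (exn l)).
pose hs n := iter n (fun l => nxt l :: l) [::].
pose h n := nxt (hs n).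
have hS : forall n, S (h n) by move=> n; exact: (proj2_sig (cid (exn (hs n)))).1.
have hnot : forall n, ~ List.In (h n) (hs n)
  by move=> n; exact: (proj2_sig (cid (exn (hs n)))).2.
have in_hs : forall m n, (m < n)%N -> List.In (h m) (hs n).
  move=> m; elim => [//|n IH]; rewrite ltnS leq_eqVlt => /orP [/eqP ->|mn].
    by rewrite /hs iterS; left.
  by rewrite /hs iterS; right; exact: IH.
have hinj : forall m n, h m = h n -> m = n.
  move=> m n hmn; case: (ltngtP m n) => // [mn|nm].
    by exfalso; apply: (hnot n); rewrite -hmn; exact: in_hs.
  by exfalso; apply: (hnot m); rewrite hmn; exact: in_hs.
pose G i n := proj1_sig (cid (SY _ (hS n) i)).
have hG : forall i n, h n i = PN AA (G i n) by move=> i n; exact: (proj2_sig (cid (SY _ (hS n) i))).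
have [p [pf hp]] := @core AA I G mad hc.
have [x hx] : exists x : I -> psi_pt AA, forall i W, psi_open W -> W (x i) ->
    p [set n | W (PN AA (G i n))].
  by exists (fun i => proj1_sig (cid (hp i))) => i; exact: (proj2_sig (cid (hp i))).
exists x => U Uo Ux.
have [F [Vf [Ffin [FV Ug]]]] := Uo x Ux.
have [pu pfree] := pf.
have [pT [p0 [pmon [pI pU]]]] := pu.
have P1 : p [set n | forall i, F i -> Vf i (h n i)].
  apply: (finI (fun i => [set n | Vf i (h n i)]) pu Ffin) => i Fi.
  have [Vo Vx] := FV i Fi.
  by apply: (pmon _ _ (hx i _ Vo Vx)) => n /=; rewrite hG.
have P2 : p (~` [set n | h n = x]).
  case: (pU [set n | h n = x]) => // hB; exfalso; apply: (pfree _ _ hB).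
  case: (pselect (exists m, h m = x)) => [[m hm]|hn].
    apply: (sub_finite_set _ (finite_set1 m)) => n /= hn; apply: hinj; by rewrite hn hm.
  by apply: (sub_finite_set _ (finite_set0 _)) => n /= hn'; apply: hn; exists n.
have P3 := pI _ _ P1 P2.
case: (pselect (exists n, [set n | forall i, F i -> Vf i (h n i)] n /\ h n <> x)) => [[n [hn1 hn2]]|hno].
  exists (h n); split; first exact: hS.
  split => //; apply: Ug => i Fi; exact: hn1.
exfalso; apply: p0; apply: (pmon _ _ P3) => n [hn1 hn2]; apply: hno; by exists n.
Qed.
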